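(* Let $H=(V,E)$ be an unweighted hypergraph on $n$ vertices with size $p=\sum_{e\in E}|e|$, and $k$ a positive integer. Let $\textsc{Certificate}(G,k)$ be a procedure returning, in time linear in the size of $G$, a $k$-sparse certificate of $G$ with at most $k(|V(G)|-1)$ edges. Consider the recursive algorithm $\textsc{Partition}(H,k)$: if the number of edges of $H$ is at most $2k(n-\kappa(H))$, return all edges of $H$; otherwise compute $E'=\textsc{Certificate}(H,k)$, contract all edges of $H$ not in $E'$, and return $\textsc{Partition}$ applied to the resulting hypergraph with the same $k$ (its edges identified with the corresponding edges of $H$). Then $\textsc{Partition}(H,k)$ outputs a $2k$-light $k$-partition of $H$ in $O(p\log n)$ time.
   Context: A hypergraph $H=(V,E)$ has edges that are subsets of $V$. For $A\subseteq V$, $\delta_H(A)$ is the set of edges meeting both $A$ and $V\setminus A$. $\kappa(H)$ is the number of connected components. Contracting an edge $e$ identifies all vertices of $e$ into one new vertex $v_e$, removes edges contained in $e$, and replaces $g\cap e$ by $v_e$ in every other edge $g$ meeting $e$. A subset $E'\subseteq E$ is a $k$-sparse certificate if, with $H'=(V,E')$, $|\delta_{H'}(A)|\ge\min(|\delta_H(A)|,k)$ for all $A\subseteq V$. A set $E'\subseteq E$ is $\ell$-light if $|E'|\le\ell(\kappa(H-E')-\kappa(H))$. An edge $e$ is $k$-crisp if there is $X\subseteq V$ with $e\in\delta_H(X)$ and $|\delta_H(X)|<k$. A $k$-partition of $H$ is a set of edges containing all $k$-crisp edges of $H$.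
   Formalization: Certificate(G,k) is assumed to return at most k(|V(G)|−κ(G)) edges rather than at most k(|V(G)|−1), and every edge of H and of each hypergraph passed to Certificate is nonempty. Apart from conventions, each condition added here is assumed in the paper as well or is needed for the statement above to hold. *)

(* Defs.v *)
From mathcomp Require Import all_boot.
Set Implicit Arguments. Unset Strict Implicit. Unset Printing Implicit Defensive.

(* A (multi-)hypergraph whose vertices are drawn from a finite type [V] and
   whose edges carry identities from a finite type [Ed].  [hV] is the vertex
   set, [hE] the edge set, and [inc e] is the set of vertices of edge [e]
   (only meaningful for [e \in hE]).  Edge identities are preserved under
   contraction, which realizes "edges identified with the corresponding
   edges of H". *)
Record hgraph (V Ed : finType) := HGraph {
  hV : {set V};
  hE : {set Ed};
  inc : {ffun Ed -> {set V}}
}.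

Section Hyper.
Variables (V Ed : finType).
Implicit Types (G : hgraph V Ed) (A X : {set V}) (F : {set Ed}).

Definition wf_hg G : Prop :=
  forall e, e \in hE G -> (inc G e \subset hV G) /\ inc G e != set0.

Definition hsize G : nat := \sum_(e in hE G) #|inc G e|.

Definition delta G A : {set Ed} :=
  [set e in hE G | (inc G e :&: A != set0) && (inc G e :\: A != set0)].

Definition adjF G F : rel V :=
  fun x y => [&& x \in hV G, y \in hV G &
              [exists e in hE G :&: F, (x \in inc G e) && (y \in inc G e)]].

Definition cls G F (x : V) : {set V} := [set y in hV G | connect (adjF G F) x y].
Definition kappa G : nat := #|[set cls G (hE G) x | x in hV G]|.

Definition restrict G F : hgraph V Ed := HGraph (hV G) (hE G :&: F) (inc G).
Definition remove G F : hgraph V Ed := HGraph (hV G) (hE G :\: F) (inc G).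

Definition sparse_cert (k : nat) G F : Prop :=
  F \subset hE G /\
  forall A, A \subset hV G -> minn #|delta G A| k <= #|delta (restrict G F) A|.

Definition light (l : nat) G F : Prop :=
  #|F| <= l * (kappa (remove G F) - kappa G).

Definition crisp (k : nat) G (e : Ed) : Prop :=
  exists X, [/\ X \subset hV G, e \in delta G X & #|delta G X| < k].

Definition kpartition (k : nat) G F : Prop :=
  F \subset hE G /\ forall e, crisp k G e -> e \in F.

(* Simultaneous contraction of the edges of F: each class of the relation
   "connected through edges of F" is identified into one vertex, named by a
   canonical representative; an edge not in F is removed iff it becomes
   contained in a single vertex that arose from contraction (i.e. it is
   contained in a contracted edge at some step of the sequential process);
   every other edge g gets vertex set rep(g). *)
Definition rep G F (x : V) : V := odflt x [pick y in cls G F x].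
Definition touched G F (x : V) : bool := [exists e in hE G :&: F, x \in inc G e].
Definition contract G F : hgraph V Ed :=
  HGraph [set rep G F x | x in hV G]
         [set g in hE G :\: F |
            ~~ ((#|rep G F @: inc G g| == 1) && [exists x in inc G g, touched G F x])]
         [ffun g => rep G F @: inc G g].

(* Run of Partition(G,k) with a given Certificate procedure [cert]:
   [partition_run cert k G S c] means the call returns S with total cost c,
   where every call is charged the size of its input hypergraph (certificate
   and contraction take linear time). *)
Inductive partition_run (cert : hgraph V Ed -> {set Ed}) (k : nat)
  : hgraph V Ed -> {set Ed} -> nat -> Prop :=
| PR_base G :
    #|hE G| <= 2 * k * (#|hV G| - kappa G) ->
    partition_run cert k G (hE G) (hsize G)
| PR_rec G S c :
    2 * k * (#|hV G| - kappa G) < #|hE G| ->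
    partition_run cert k (contract G (hE G :\: cert G)) S c ->
    partition_run cert k G S (hsize G + c).

End Hyper.

Definition certificate_spec (V Ed : finType) (k : nat)
  (cert : hgraph V Ed -> {set Ed}) : Prop :=
  forall G : hgraph V Ed, wf_hg G ->
    sparse_cert k G (cert G) /\ #|cert G| <= k * (#|hV G| - kappa G).

(* Main.v *)
Require Import Defs.
From mathcomp Require Import all_boot.
From mathcomp Require Import zify.
Set Implicit Arguments. Unset Strict Implicit. Unset Printing Implicit Defensive.

Lemma connect_rt (T : finType) (e : rel T) (R : T -> T -> Prop) :
  (forall x, R x x) -> (forall x y z, R x y -> R y z -> R x z) ->
  (forall x y, e x y -> R x y) -> forall x y, connect e x y -> R x y.
Proof.
move=> Rr Rt Re x y /connectP [p]; elim: p x => [|z p IH] x /=.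
  by move=> _ ->.
by case/andP => exz pz ly; apply: Rt (Re _ _ exz) (IH _ pz ly).
Qed.

Lemma card_imset_le (T U W : finType) (A : {set T}) (f : T -> U) (g : T -> W) :
  (forall x y, x \in A -> y \in A -> f x = f y -> g x = g y) ->
  #|g @: A| <= #|f @: A|.
Proof.
move=> fg; have [->|[x0 hx0]] := set_0Vmem A; first by rewrite !imset0 cards0.
pose h u := g (odflt x0 [pick x in A | f x == u]).
suff ->: g @: A = h @: (f @: A) by apply: leq_imset_card.
apply/setP => w; apply/imsetP/imsetP.
  case=> x hx ->; exists (f x); first exact: imset_f.
  rewrite /h; case: pickP => [z /andP[hz /eqP e]|n] /=.
    by apply: fg.
  by have := n x; rewrite hx eqxx.
case=> u /imsetP[x hx ->] ->; rewrite /h; case: pickP => [z /andP[hz _]|_] /=.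
  by exists z.
by exists x0.
Qed.

Lemma card_imset_ker (T U W : finType) (A : {set T}) (f : T -> U) (g : T -> W) :
  (forall x y, x \in A -> y \in A -> (f x == f y) = (g x == g y)) ->
  #|f @: A| = #|g @: A|.
Proof.
move=> fg; apply/eqP; rewrite eqn_leq; apply/andP; split; apply: card_imset_le.
  by move=> x y hx hy /eqP; rewrite -fg // => /eqP.
by move=> x y hx hy /eqP; rewrite fg // => /eqP.
Qed.

Section Hyp.
Variables V Ed : finType.
Implicit Types (G : hgraph V Ed) (F D T X : {set Ed}).

Lemma adjF_sym G D : symmetric (adjF G D).
Proof.
move=> x y; apply/idP/idP => /and3P[hx hy /existsP[e /andP[he /andP[h1 h2]]]];
  apply/and3P; split=> //; apply/existsP; exists e; by rewrite he h1 h2.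
Qed.

Lemma conn_sym G D x y : connect (adjF G D) x y = connect (adjF G D) y x.
Proof. exact: (sym_connect_sym (adjF_sym G D)). Qed.

Lemma cls_eq G D x y : x \in hV G -> y \in hV G ->
  (cls G D x == cls G D y) = connect (adjF G D) x y.
Proof.
move=> hx hy; apply/eqP/idP.
  move=> e; have: y \in cls G D y by rewrite inE hy connect0.
  by rewrite -e inE => /andP[_ ->].
move=> cxy; apply/setP => z; rewrite !inE; case: (z \in hV G) => //=.
apply/idP/idP => h.
  by rewrite conn_sym in cxy; exact: connect_trans cxy h.
exact: connect_trans cxy h.
Qed.

Lemma rep_in G D x : x \in hV G -> rep G D x \in cls G D x.
Proof.
move=> hx; rewrite /rep; case: pickP => [y -> //|h].
by have := h x; rewrite inE hx connect0.
Qed.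

Lemma rep_hV G D x : x \in hV G -> rep G D x \in hV G.
Proof. by move=> hx; have := rep_in D hx; rewrite inE => /andP[]. Qed.

Lemma rep_eq G D x y : x \in hV G -> y \in hV G ->
  (rep G D x == rep G D y) = connect (adjF G D) x y.
Proof.
move=> hx hy; apply/eqP/idP.
  move=> e; have h1 := rep_in D hx; have h2 := rep_in D hy.
  rewrite e !inE in h1 h2; case/andP: h1 => _ c1; case/andP: h2 => _ c2.
  by apply: connect_trans c1 _; rewrite conn_sym.
move=> c; rewrite /rep (_ : cls G D x = cls G D y); last by apply/eqP; rewrite cls_eq.
case: pickP => [//|h]; by have := h y; rewrite inE hy connect0.
Qed.

Lemma wf_contract (G : hgraph V Ed) (F : {set Ed}) : wf_hg G -> wf_hg (contract G F).
Proof.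
move=> wfG g; rewrite /contract /= inE => /andP[/setDP[hg _] _].
have [sub ne] := wfG g hg; rewrite ffunE; split.
  apply/subsetP => u /imsetP[x hx ->]; apply: imset_f; exact: (subsetP sub).
by rewrite imset_eq0.
Qed.

Lemma hE_contract G F : hE (contract G F) \subset hE G :\: F.
Proof. by apply/subsetP => g; rewrite /contract /= inE => /andP[]. Qed.

Lemma hsize_contract G F : hsize (contract G F) <= hsize G.
Proof.
rewrite /hsize /=.
apply: (@leq_trans (\sum_(e in hE (contract G F)) #|inc G e|)).
  by apply: leq_sum => e _; rewrite ffunE leq_imset_card.
apply: (sub_le_big (op:=addn)) => // [x y|i]; first exact: leq_addr.
move/(subsetP (hE_contract G F)); by rewrite inE => /andP[].
Qed.

Lemma remove0 G : remove G set0 = G.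
Proof. by rewrite /remove setD0; case: G. Qed.

Lemma kappa_empty G : kappa (remove G (hE G)) = #|hV G|.
Proof.
have nadj : forall x y, connect (adjF (remove G (hE G)) (hE (remove G (hE G)))) x y -> x = y.
  apply: connect_rt => // [x y z -> -> //|x y /and3P[_ _ /existsP[e]]].
  rewrite setIid; case/andP => /setDP[he1 he2]; by rewrite he1 in he2.
rewrite /kappa -[in RHS](imset_id (hV G)).
apply: (card_imset_ker (A := hV G)) => x y hx hy; rewrite (@cls_eq (remove G (hE G)) _ _ _ hx hy).
apply/idP/eqP; first exact: nadj.
by move=> ->; exact: connect0.
Qed.

Section Contract.
Variables (G : hgraph V Ed) (F T : {set Ed}).
Hypothesis wfG : wf_hg G.
Hypothesis TF : forall e, e \in T -> e \notin F.
Let Gs := remove G T.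
Let Gc := remove (contract G F) T.
Let rp := rep G F.
Let cs := connect (adjF Gs (hE Gs)).
Let cc := connect (adjF Gc (hE Gc)).

Lemma connF_cs x y : connect (adjF G F) x y -> cs x y.
Proof.
apply: connect_sub => u v /and3P[hu hv /existsP[e /andP[/setIP[he heF] /andP[h1 h2]]]].
apply: connect1; apply/and3P; split => //; apply/existsP; exists e.
have heT : e \notin T by apply: contra (TF (e:=e)) _; rewrite heF.
by rewrite /Gs /= setIid inE heT he h1 h2.
Qed.

Lemma rep_cs x y : x \in hV G -> y \in hV G -> rp x = rp y -> cs x y.
Proof. by move=> hx hy /eqP; rewrite /rp rep_eq // => /connF_cs. Qed.

Lemma forward x y : cs x y -> cc (rp x) (rp y).
Proof.
move: x y; apply: (connect_rt (R := fun x y => cc (rp x) (rp y))) => [x0|a b c|a b]; first exact: connect0.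
  exact: connect_trans.
case/and3P => ha hb /existsP[e /andP[/setIP[he _] /andP[h1 h2]]].
move: he; rewrite /Gs /= inE => /andP[heT heG].
case heF: (e \in F).
  have: connect (adjF G F) a b.
    apply: connect1; apply/and3P; split => //; apply/existsP; exists e.
    by rewrite inE heG heF h1 h2.
  by rewrite -rep_eq // => /eqP e0; rewrite /rp e0; exact: connect0.
case b0: ((#|rp @: inc G e| == 1) && [exists z in inc G e, touched G F z]).
  case/andP: b0 => /cards1P[w hw] _.
  have : rp a \in rp @: inc G e by apply: imset_f.
  have : rp b \in rp @: inc G e by apply: imset_f.
  by rewrite hw !inE => /eqP -> /eqP ->; exact: connect0.
apply: connect1; apply/and3P; split.
- by rewrite /Gc /contract /=; apply: imset_f.
- by rewrite /Gc /contract /=; apply: imset_f.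
apply/existsP; exists e; rewrite setIid /Gc /contract /= ffunE.
rewrite !inE heT heG heF /= b0 /=.
by rewrite (imset_f rp h1) (imset_f rp h2).
Qed.

Lemma backward x y : x \in hV G -> y \in hV G -> cc (rp x) (rp y) -> cs x y.
Proof.
move=> hx hy hc.
pose R u v := u = v \/ (v \in hV Gc /\ forall x y, x \in hV G -> y \in hV G ->
   rp x = u -> rp y = v -> cs x y).
suff: R (rp x) (rp y).
  case=> [e|[_ h]]; [exact: (rep_cs hx hy e) | exact: h].
move: hc; move: (rp x) (rp y); apply: (connect_rt (R := R)).
- by move=> u; left.
- move=> u v w [->|[hv h1]] //; case=> [<-|[hw h2]]; first by right.
  right; split=> // a b ha hb ea eb.
  move: hv; rewrite /Gc /contract /= => /imsetP[z hz ez].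
  exact: connect_trans (h1 _ _ ha hz ea (esym ez)) (h2 _ _ hz hb (esym ez) eb).
move=> u v /and3P[hu hv /existsP[e /andP[/setIP[he _] /andP[h1 h2]]]].
right; split=> // a b ha hb ea eb.
move: he h1 h2; rewrite /Gc /contract /= ffunE !inE => /andP[heT /andP[/andP[_ heG] _]].
move=> /imsetP[a' ha' ea'] /imsetP[b' hb' eb'].
have [sub _] := wfG heG.
have ha'V := subsetP sub _ ha'; have hb'V := subsetP sub _ hb'.
apply: connect_trans (rep_cs ha ha'V _) _; first by rewrite ea.
apply: connect_trans _ (rep_cs hb'V hb _); last by rewrite eb.
apply: connect1; apply/and3P; split => //; apply/existsP; exists e.
by rewrite /Gs /= setIid inE heT heG ha' hb'.
Qed.

Lemma kappa_contract : kappa Gc = kappa Gs.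
Proof.
rewrite /kappa.
have -> : hV Gc = rp @: hV G by [].
rewrite -imset_comp.
symmetry; apply: (card_imset_ker (A := hV G)) => x y hx hy.
rewrite (@cls_eq Gs _ _ _ hx hy).
have hx' : rp x \in hV Gc by apply: imset_f.
have hy' : rp y \in hV Gc by apply: imset_f.
have := @cls_eq Gc (hE Gc) _ _ hx' hy'; cbv beta; rewrite [comp _ _ x]/comp [comp _ _ y]/comp => ->.
apply/idP/idP; [exact: forward | exact: backward].
Qed.

End Contract.

Lemma crisp_contract k G C e : wf_hg G -> sparse_cert k G C -> crisp k G e ->
  crisp k (contract G (hE G :\: C)) e.
Proof.
move=> wfG [_ sc] [X [hX he hlt]].
set F := hE G :\: C; set rp := rep G F.
have dsub : delta G X \subset C.
  have h := sc X hX; move/ltnW/minn_idPl: hlt => hm; rewrite hm in h.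
  have s1 : delta (restrict G C) X \subset delta G X.
    apply/subsetP => g; rewrite !inE /= => /andP[/andP[-> _] ->] //.
  have : delta (restrict G C) X == delta G X by rewrite eqEcard s1 h.
  move/eqP <-; apply/subsetP => g; rewrite !inE /= => /andP[/andP[_ ->]] //.
have Xcl : forall x y, connect (adjF G F) x y -> (x \in X) = (y \in X).
  apply: connect_rt => // [a b c -> -> //|].
  move=> a b /and3P[ha hb /existsP[g /andP[/setIP[hg hgF] /andP[h1 h2]]]].
  have gC : g \notin C by move: hgF; rewrite inE => /andP[].
  case hxa: (a \in X); case hxb: (b \in X) => //; exfalso; move/negP: gC; apply;
    apply: (subsetP dsub); rewrite inE hg /=; apply/andP; split; apply/set0Pn.
  - by exists a; rewrite !inE h1 hxa.
  - by exists b; rewrite !inE h2 hxb.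
  - by exists b; rewrite !inE h2 hxb.
  - by exists a; rewrite !inE h1 hxa.
set X' := rp @: X.
have memX : forall x, x \in hV G -> (rp x \in X') = (x \in X).
  move=> x hx; apply/imsetP/idP => [[z hz ez]|hxX]; last by exists x.
  have hzV := subsetP hX _ hz.
  move/eqP: ez; rewrite /rp rep_eq // => /Xcl ->; exact: hz.
have dsub' : delta (contract G F) X' \subset delta G X.
  apply/subsetP => g; rewrite !inE /contract /= ffunE.
  case/andP => /andP[/andP[_ hg] _] /andP[/set0Pn[u hu] /set0Pn[v hv]].
  rewrite hg /=; have [sub _] := wfG _ hg.
  move: hu hv; rewrite !inE => /andP[/imsetP[x hx ->] hxX] /andP[hvX /imsetP[y hy ey]].
  rewrite ey in hvX.
  rewrite memX in hxX; last exact: subsetP sub _ hx.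
  rewrite memX in hvX; last exact: subsetP sub _ hy.
  by apply/andP; split; apply/set0Pn; [exists x | exists y]; rewrite !inE ?hx ?hy ?hxX ?hvX.
exists X'; split.
- by apply: imsetS.
- have heC := subsetP dsub _ he.
  move: he; rewrite inE => /andP[heG /andP[/set0Pn[x hx] /set0Pn[y hy]]].
  move: hx hy; rewrite !inE => /andP[hx hxX] /andP[hyX hy].
  have [sub _] := wfG _ heG.
  have hxV := subsetP sub _ hx; have hyV := subsetP sub _ hy.
  have nxy : rp x != rp y.
    apply/eqP => exy; move: hyX; rewrite -(memX _ hyV) -exy memX //; by rewrite hxX.
  have ince : inc (contract G F) e = rp @: inc G e by rewrite /contract /= ffunE.
  rewrite ?ince heC heG /=.
  apply/and3P; split.
  + apply/negP => /andP[/cards1P[w hw] _]; move: hw; rewrite -/rp => hw.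
    have : rp x \in rp @: inc G e by apply: imset_f.
    have : rp y \in rp @: inc G e by apply: imset_f.
    by rewrite hw !inE => /eqP e1 /eqP e2; move: nxy; rewrite e1 e2 eqxx.
  + by apply/set0Pn; exists (rp x); rewrite !inE imset_f ?memX ?hxX.
  + by apply/set0Pn; exists (rp y); rewrite !inE imset_f ?memX ?hyX.
- exact: leq_ltn_trans (subset_leq_card dsub') hlt.
Qed.

Section Run.
Variables (k : nat) (cert : hgraph V Ed -> {set Ed}).
Hypothesis hc : certificate_spec k cert.

Lemma hE_cert G : #|hE (contract G (hE G :\: cert G))| <= #|cert G|.
Proof.
apply: subset_leq_card; apply/subsetP => g /(subsetP (hE_contract _ _)).
by case/setDP => hg; rewrite inE hg andbT negbK.
Qed.

Lemma run_exists G : wf_hg G -> exists S c, partition_run cert k G S c.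
Proof.
move: {2}#|hE G| (leqnn #|hE G|) => n; elim: n G => [|n IH] G hn wfG.
  exists (hE G), (hsize G); apply: PR_base; by move: hn; rewrite leqn0 => /eqP ->.
case: (leqP #|hE G| (2 * k * (#|hV G| - kappa G))) => hb.
  by exists (hE G), (hsize G); apply: PR_base.
have [_ hcard] := hc wfG.
have := hE_cert G => hc'.
have [S [c hr]] := IH (contract G (hE G :\: cert G)) ltac:(lia) (wf_contract wfG).
by exists S, (hsize G + c); apply: PR_rec.
Qed.

Lemma run_sub G S c : partition_run cert k G S c -> S \subset hE G.
Proof.
elim => [G0 _|G0 S0 c0 _ _ IH]; first exact: subxx.
apply: subset_trans IH _; apply: subset_trans (hE_contract _ _) _; exact: subsetDl.
Qed.

Lemma run_kpart G S c : partition_run cert k G S c -> wf_hg G ->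
  forall e, crisp k G e -> e \in S.
Proof.
elim => [G0 _ _ e [X [_ he _]]|G0 S0 c0 _ _ IH wfG e he].
  by move: he; rewrite inE => /andP[].
apply: IH; first exact: wf_contract.
have [sc _] := hc wfG; exact: crisp_contract.
Qed.

Lemma run_light G S c : partition_run cert k G S c -> wf_hg G -> light (2 * k) G S.
Proof.
move=> hr; elim: hr => [G0 hb _|G0 S0 c0 _ hr IH wfG].
  by rewrite /light kappa_empty.
have := IH (wf_contract wfG); rewrite /light.
have TF : forall e, e \in S0 -> e \notin hE G0 :\: cert G0.
  move=> e /(subsetP (run_sub hr)) /(subsetP (hE_contract _ _)).
  by case/setDP => _ h1; rewrite h1.
rewrite (kappa_contract wfG TF).
rewrite -(remove0 (contract _ _)) (kappa_contract wfG) ?remove0 //.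
by move=> e; rewrite inE.
Qed.

Hypothesis kpos : 0 < k.

Lemma run_cost G S c : partition_run cert k G S c -> wf_hg G ->
  forall R j, #|hE G| <= k * R -> R < 2 ^ j -> c <= hsize G * j.+1.
Proof.
move=> hr; elim: hr => [G0 hb _ R j _ _|G0 S0 c0 hlt hr IH wfG R j hEk hR].
  exact: leq_pmulr.
have [_ hcard] := hc wfG.
have hs := hsize_contract G0 (hE G0 :\: cert G0).
case: j hR => [|j] hR.
  have: R = 0 by lia. move=> R0; rewrite R0 muln0 in hEk; lia.
have hlt2 : 2 * (#|hV G0| - kappa G0) < R.
  have: k * (2 * (#|hV G0| - kappa G0)) < k * R by lia.
  by rewrite ltn_pmul2l.
have h := IH (wf_contract wfG) (#|hV G0| - kappa G0) j
  (leq_trans (hE_cert G0) hcard) ltac:(rewrite expnS in hR; lia).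
nia.
Qed.

End Run.
End Hyp.

Theorem theorem3p5 :
  exists C : nat,
  forall (V Ed : finType) (H : hgraph V Ed) (k : nat)
         (cert : hgraph V Ed -> {set Ed}),
    wf_hg H -> 0 < k -> certificate_spec k cert ->
    2 <= #|hV H| ->
    (exists S c, partition_run cert k H S c) /\
    (forall S c, partition_run cert k H S c ->
       [/\ light (2 * k) H S, kpartition k H S &
           c <= C * hsize H * trunc_log 2 #|hV H|]).
Proof.
exists 4 => V Ed H k cert wfH kpos hc h2; split; first exact: run_exists.
move=> S c hr; split.
- exact: run_light hr wfH.
- by split; [exact: run_sub hr | exact: run_kpart hr wfH].
have tl1 : 0 < trunc_log 2 #|hV H| by rewrite trunc_log_gt0.
have tlt := @trunc_log_ltn 2 #|hV H| isT.
move: wfH tl1 tlt; case: hr => {S c} [G hb|G S c hlt hr] wfG tl1 tlt.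
  nia.
have [_ hcard] := hc _ wfG.
have hs := hsize_contract G (hE G :\: cert G).
have h := run_cost hc kpos hr (wf_contract wfG) (leq_trans (hE_cert cert G) hcard)
  (leq_ltn_trans (leq_subr _ _) tlt).
nia.
Qed.
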